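(* Fix a constant $c \in (0,1)$. For $\eta \in (0,1]$, $\omega \in [-c,c]$ and $\epsilon \in (0,1)$, let $f:[-1,1]\to\mathbb{C}$ be the $\eta$-scaled retarded Green's function $$f(x) = \frac{\eta}{(\omega + i\eta) - x}.$$ Then there is a polynomial $p_d$ (with complex coefficients) of degree $d = O\!\left(\frac{1}{\eta}\log\frac{1}{\epsilon}\right)$, where the implied constant depends only on $c$, such that $\|f - p_d\|_{[-1,1]} \le \epsilon$ and $\|p_d\|_{[-1,1]} \le 1+\epsilon$.
   Context: For a function $g$ on $[-1,1]$, $\|g\|_{[-1,1]} = \sup_{x\in[-1,1]} |g(x)|$ denotes the uniform norm; $i$ is the imaginary unit. *)

(* Defs.v *)
From mathcomp Require Import all_boot all_order all_algebra.
From mathcomp Require Export complex.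
From mathcomp Require Export reals exp.
Import GRing.Theory Num.Theory.
Local Open Scope ring_scope.
Local Open Scope complex_scope.

Definition green {R : realType} (eta omega : R) (x : R) : R[i] :=
  eta%:C / ((omega%:C + 'i * eta%:C) - x%:C).

Definition unif_le {R : realType} (g : R -> R[i]) (r : R) : Prop :=
  forall x : R, -1 <= x <= 1 -> `|g x| <= r%:C.

(* Main.v *)
Require Import Defs.
From mathcomp Require Import all_boot all_order all_algebra.
From mathcomp Require Import complex reals exp.
From mathcomp Require Import ring lra zify.
Import Order.TTheory GRing.Theory Num.Theory.
Local Open Scope ring_scope.
Local Open Scope complex_scope.

Fixpoint chebp {A : nzRingType} (u : A) (n : nat) : A * A :=
  match n with
  | 0 => (1, u)
  | n'.+1 => let ab := chebp u n' in (ab.2, 2%:R * u * ab.2 - ab.1)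
  end.

Lemma cheb_inv {R : realFieldType} (t : R) n : -1 <= t <= 1 ->
  let a := (chebp t n).1 in let b := (chebp t n).2 in
  a^+2 - 2 * t * a * b + b^+2 = 1 - t^+2 /\ a^+2 <= 1 /\ b^+2 <= 1.
Proof.
move=> /andP [h1 h2]; elim: n => [|n IH] /=.
  split; first by ring. split; first by rewrite expr1n.
  nra.
move: IH; case: (chebp t n) => a b /= [hq [ha hb]].
have hq' : b ^+ 2 - 2 * t * b * (2 * t * b - a) + (2 * t * b - a) ^+ 2 = 1 - t ^+ 2.
  rewrite -hq. move: a b {hq ha hb} => a b. ring.
split; first by rewrite -hq'. split => //.
have key0 : (b - t * (2 * t * b - a))^+2 + (1 - t^+2) * (2 * t * b - a)^+2 = 1 - t^+2.
  by rewrite -[RHS]hq'; ring.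
have key : (1 - t^+2) * (1 - (2 * t * b - a)^+2) = (b - t * (2 * t * b - a))^+2.
  by rewrite mulrBr mulr1 -{1}key0; ring.
have [ht|ht] := boolP (t^+2 == 1).
  move/eqP: ht => ht.
  have e : b - t * (2 * t * b - a) = 0.
    by apply/eqP; rewrite -sqrf_eq0 -key ht subrr mul0r.
  have -> : 2 * t * b - a = t * b.
    have : t * (b - t * (2 * t * b - a)) = 0 by rewrite e mulr0.
    have -> : t * (b - t * (2 * t * b - a)) = t * b - t^+2 * (2 * t * b - a) by ring.
    by rewrite ht mul1r => /eqP; rewrite subr_eq0 => /eqP ->.
  by rewrite exprMn ht mul1r.
have htl : t^+2 < 1.
  rewrite lt_neqAle ht /=; nra.
have : 0 <= (1 - t^+2) * (1 - (2 * t * b - a)^+2) by rewrite key sqr_ge0.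
rewrite pmulr_rge0 ?subr_gt0 // subr_ge0 //.
Qed.

Lemma cheb_le1 {R : realFieldType} (t : R) n : -1 <= t <= 1 -> `|(chebp t n).1| <= 1.
Proof.
move=> ht; have [_ [ha _]] := @cheb_inv _ t n ht.
by rewrite -(expr_le1 (n:=2)) // real_normK ?num_real.
Qed.
Lemma chebp_morph {A B : nzRingType} (f : {rmorphism A -> B}) u n :
  chebp (f u) n = (f (chebp u n).1, f (chebp u n).2).
Proof.
elim: n => [|n IH] /=; first by rewrite rmorph1.
by rewrite IH /= rmorphB !rmorphM rmorph_nat.
Qed.

Lemma chebp_horner {A : comNzRingType} (U : {poly A}) x n :
  ((chebp U n).1.[x], (chebp U n).2.[x]) = chebp U.[x] n.
Proof.
elim: n => [|n IH] /=; first by rewrite hornerE.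
by rewrite -IH /= !hornerE.
Qed.

Lemma chebp_size {A : comNzRingType} (U : {poly A}) n :
  (size U <= 3)%N -> (size (chebp U n).1 <= n.*2.+1)%N /\ (size (chebp U n).2 <= n.*2.+3)%N.
Proof.
move=> hU; elim: n => [|n [IH1 IH2]] /=.
  by rewrite size_poly1; split=> //; apply: leq_trans hU _.
split=> //.
apply: leq_trans (size_polyD _ _) _; rewrite geq_max size_polyN.
apply/andP; split; last by apply: leq_trans IH1 _; rewrite doubleS; lia.
apply: leq_trans (size_polyMleq _ _) _.
have h2 : (size ((2%:R * U)%R : {poly A}) <= 3)%N.
  apply: leq_trans (size_polyMleq _ _) _; rewrite -polyC_natr.
  by rewrite -subn1 leq_subLR; apply: (leq_add (size_polyC_leq1 _) hU).
move: h2 IH2; rewrite doubleS -!addnn. move: (size (chebp U n).2) (size (2 * U)%R) => b a h2 IH2. rewrite -subn1 leq_subLR. lia.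
Qed.

Lemma chebp_closed {F : fieldType} (l m : F) n : l * m = 1 -> (2 : F) != 0 ->
  chebp ((l + m) / 2%:R) n = ((l ^+ n + m ^+ n) / 2%:R, (l ^+ n.+1 + m ^+ n.+1) / 2%:R).
Proof.
move=> hlm h2; elim: n => [|n IH] /=.
  by rewrite !expr0 !expr1; congr (_, _); field.
rewrite IH /=; congr (_, _).
rewrite !exprS.
have -> : (l * (l * l ^+ n) + m * (m * m ^+ n)) / 2%:R =
   (l * (l * l ^+ n) + m * (m * m ^+ n)) / 2%:R + (l * m - 1) * (l^+n + m^+n) / 2%:R
  by rewrite hlm subrr mul0r mul0r addr0.
by field.
Qed.

Lemma cheb_grow {R : rcfType} (a : R) n : 1 <= a ->
  (a + Num.sqrt (a^+2 - 1)) ^+ n / 2 <= (chebp a n).1.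
Proof.
move=> ha; set s := Num.sqrt (a^+2 - 1).
have hs : s^+2 = a^+2 - 1 by rewrite sqr_sqrtr // subr_ge0 expr_ge1 // (le_trans ler01 ha).
have hs0 : 0 <= s by rewrite sqrtr_ge0.
have hlm : (a + s) * (a - s) = 1.
  transitivity (a^+2 - s^+2); first by ring. by rewrite hs; ring.
have h2 : (2 : R) != 0 by rewrite pnatr_eq0.
have := @chebp_closed R (a + s) (a - s) n hlm h2.
have -> : (a + s + (a - s)) / 2 = a by field.
move=> -> /=.
have hm : 0 <= a - s.
  have hl : 0 < a + s by apply: (lt_le_trans ltr01); apply: (le_trans ha); rewrite lerDl.
  have : 0 < (a + s) * (a - s) by rewrite hlm ltr01.
  by rewrite pmulr_rgt0 // => /ltW.
rewrite ler_pM2r ?invr_gt0 ?ltr0n // lerDl.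
exact: exprn_ge0.
Qed.

Lemma normC_real {R : rcfType} (y : R) : `|y%:C| = `|y|%:C.
Proof. by rewrite normc_def /= expr0n addr0 sqrtr_sqr. Qed.

Lemma normC_di {R : rcfType} (d e : R) :
  `|d%:C + 'i * e%:C| = (Num.sqrt (d^+2 + e^+2))%:C.
Proof. by rewrite normc_def /= !(mul0r, mulr0, mul1r, subr0, add0r, addr0). Qed.

Lemma bern {R : realFieldType} (h : R) m : 0 <= h -> 1 + m%:R * h <= (1 + h) ^+ m.
Proof.
move=> h0; elim: m => [|m IH]; first by rewrite mul0r addr0 expr0.
rewrite exprS -natr1.
have hm : 0 <= m%:R * h by rewrite mulr_ge0 ?ler0n.
have : (1 + h) * (1 + m%:R * h) <= (1 + h) * (1 + h) ^+ m.
  have h1 : 0 < 1 + h by lra.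
  by rewrite ler_pM2l.
apply: le_trans. nra.
Qed.

Lemma sq_bound {R : realFieldType} (x w c : R) :
  -1 <= x <= 1 -> -c <= w <= c -> c < 1 -> -1 <= 1 - (x - w)^+2 / 3 <= 1.
Proof.
move=> /andP[h1 h2] /andP[h3 h4] h5.
have hd1 : 0 <= 2 - (x - w) by lra.
have hd2 : 0 <= 2 + (x - w) by lra.
have := mulr_ge0 hd1 hd2.
have -> : (2 - (x - w)) * (2 + (x - w)) = 4 - (x - w)^+2 by ring.
have hd0 : 0 <= (x - w)^+2 by exact: sqr_ge0.
move=> h; apply/andP; split; lra.
Qed.

Lemma lam_bound {R : rcfType} (eta : R) : 0 < eta ->
  (eta / 2)^+2 <= (1 + eta^+2 / 3)^+2 - 1.
Proof. move=> h; have e2 : 0 <= eta^+2 by exact: sqr_ge0. nra. Qed.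

Lemma pbound {R : rcfType} (g p : R[i]) (r : R) :
  `|g| <= 1%:C -> `|g - p| <= r%:C -> `|p| <= (1 + r)%:C.
Proof.
move=> h1 h2; have -> : p = g - (g - p) by rewrite opprB addrC subrK.
by apply: le_trans (ler_normB _ _) _; rewrite rmorphD; apply: lerD.
Qed.

Theorem theorem3 (R : realType) (c : R) (hc : 0 < c < 1) :
  exists C : R, 0 < C /\
    forall eta omega eps : R,
      0 < eta <= 1 -> - c <= omega <= c -> 0 < eps < 1 ->
      exists p : {poly R[i]},
        ((size p).-1)%:R <= C * (eta^-1 * ln (eps^-1)) /\
        unif_le (fun x => green eta omega x - p.[x%:C]) eps /\
        unif_le (fun x => p.[x%:C]) (1 + eps).
Proof.
have l2 : 0 < ln (2 : R) by apply: ln_gt0; rewrite ltr1n.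
exists (18 / ln 2); split; first by rewrite divr_gt0.
move=> eta omega eps /andP[he0 he1] /andP[hw1 hw2] /andP[hp0 hp1].
have [hc0 hc1] := andP hc.
set L := ln eps^-1.
have hL : 0 < L by apply: ln_gt0; rewrite invf_gt1.
set z := (omega%:C + 'i * eta%:C).
have hw : forall x : R, z - x%:C = (omega - x)%:C + 'i * eta%:C.
  by move=> x; rewrite /z rmorphB /=; ring.
have hB : forall x : R, 0 < (omega - x)^+2 + eta^+2.
  by move=> x; apply: ltr_wpDl; [exact: sqr_ge0 | exact: exprn_gt0].
have hwn : forall x : R, `|z - x%:C| = (Num.sqrt ((omega - x)^+2 + eta^+2))%:C.
  by move=> x; rewrite hw normC_di.
have hw0 : forall x : R, z - x%:C != 0.
  by move=> x; rewrite -normr_gt0 hwn ltcR sqrtr_gt0.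
have hg_real : forall x : R, `|eta| * (Num.sqrt ((omega - x)^+2 + eta^+2))^-1 <= 1.
  move=> x; rewrite -/(_ / _) ler_pdivrMr ?sqrtr_gt0 // mul1r (ger0_norm (ltW he0)).
  apply: (@le_trans _ _ (Num.sqrt (eta^+2))).
    by rewrite sqrtr_sqr (ger0_norm (ltW he0)).
  by rewrite ler_sqrt ?(ltW (hB x)) // lerDr sqr_ge0.
have hgle : forall x : R, `|green eta omega x| <= 1%:C.
  move=> x; rewrite /green -/z normrM normfV normC_real hwn -fmorphV -rmorphM lecR.
  exact: hg_real.
have [hbig|hsmall] := lerP (2^-1) eps.
  exists ((- ('i / 2))%:P).
  have herr : unif_le (fun x => green eta omega x - (- ('i / 2))%:P.[x%:C]) eps.
    move=> x _; rewrite hornerC opprK.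
    have e : green eta omega x + 'i / 2 =
        (eta%:C + 'i * (omega - x)%:C) * ((2:R)^-1)%:C * (z - x%:C)^-1.
      have h2 : (2 : R[i]) != 0 by rewrite pnatr_eq0.
      have := hw0 x; rewrite /green -/z hw fmorphV rmorph_nat => hx.
      have hi : 'i * 'i = -1 :> R[i] by rewrite -expr2 sqr_i.
      rewrite [eta%:C + _](_ : _ = 2 * eta%:C + 'i * ((omega - x)%:C + 'i * eta%:C)).
        have hx2 : omega%:C - x%:C + 'i * eta%:C != 0 by rewrite -rmorphB.
        by field; exact: hx2.
      by rewrite mulrDr mulrA hi; ring.
    rewrite e !normrM normfV normC_di normC_real hwn -!fmorphV -!rmorphM lecR.
    rewrite [eta^+2 + _]addrC mulrAC divff ?mul1r; last by rewrite gt_eqF // sqrtr_gt0.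
    by rewrite ger0_norm // invr_ge0 ler0n.
  split; last split => //.
    have := size_polyC_leq1 (- ('i / 2) : R[i]).
    have hpos : 0 < 18 / ln 2 * (eta^-1 * L).
      by rewrite mulr_gt0 ?divr_gt0 ?mulr_gt0 ?invr_gt0.
    by case: (size _) => [|[|n]] // _ /=; exact: ltW.
  by move=> x hx; apply: pbound (hgle x) (herr x hx).
set a : R := 1 + eta^+2 / 3.
have ha1 : 1 <= a by rewrite lerDl divr_ge0 ?sqr_ge0.
set m := (Num.truncn (2 / eta)).+1.
set j := (Num.truncn (ln (2 / eps) / ln 2)).+1.
set k := (m * j)%N.
set Tz := (chebp a k).1.
have hmr : 2 / eta < m%:R by exact: truncnS_gt.
have hm3 : m%:R <= 3 * eta^-1.
  have := truncn_le (2 / eta); rewrite divr_ge0 ?(ltW he0) // => h.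
  rewrite /m -natr1; apply: le_trans (lerD h (lexx 1)) _.
  have : 1 <= eta^-1 by rewrite invf_ge1.
  rewrite -[2 / eta]/(2 * eta^-1); lra.
have hepsI : 2 <= eps^-1.
  rewrite -[2]invrK lef_pV2 ?posrE ?invr_gt0 //; exact: ltW.
have hL2 : ln 2 <= L by rewrite /L ler_ln ?posrE ?invr_gt0.
have hln2e : ln (2 / eps) = ln 2 + L by rewrite /L lnM ?posrE ?invr_gt0.
have hjr : ln (2 / eps) / ln 2 < j%:R by exact: truncnS_gt.
have hj3 : j%:R <= 3 * L * (ln 2)^-1.
  have := truncn_le (ln (2 / eps) / ln 2).
  have h0 : 0 <= ln (2 / eps) by rewrite hln2e addr_ge0 // ltW.
  rewrite divr_ge0 ?(ltW l2) // => h.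
  rewrite /j -natr1; apply: le_trans (lerD h (lexx 1)) _.
  rewrite hln2e mulrDl divff ?gt_eqF //.
  have : 1 <= L / ln 2 by rewrite ler_pdivlMr // mul1r.
  rewrite -!mulrA; lra.
have hlam : 1 + eta / 2 <= a + Num.sqrt (a^+2 - 1).
  apply: lerD => //.
  apply: (@le_trans _ _ (Num.sqrt ((eta / 2)^+2))).
    by rewrite sqrtr_sqr ger0_norm // divr_ge0 // ltW.
  rewrite ler_sqrt /a ?lam_bound //.
  by rewrite subr_ge0 -/a expr_ge1 // (le_trans ler01 ha1).
have hpow_m : 2 <= (1 + eta / 2)^+m.
  apply: le_trans _ (@bern _ (eta / 2) m _); last by rewrite divr_ge0 // ltW.
  move: hmr; rewrite ltr_pdivrMr // => h; lra.
have hpow_k : 2 ^+ j <= (1 + eta / 2)^+k.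
  rewrite /k exprM; apply: lerXn2r => //; rewrite nnegrE //.
  by rewrite exprn_ge0 // addr_ge0 // divr_ge0 // ltW.
have hj2 : 2 / eps <= 2 ^+ j.
  rewrite -ler_ln ?posrE ?exprn_gt0 ?divr_gt0 // lnXn // hln2e.
  by move: hjr; rewrite ltr_pdivrMr // hln2e mulr_natl => /ltW.
have hTz : eps^-1 <= Tz.
  have hg := @cheb_grow _ a k ha1; rewrite -/Tz in hg.
  apply: le_trans _ hg.
  have hl : (1 + eta / 2) ^+ k <= (a + Num.sqrt (a^+2 - 1)) ^+ k.
    apply: lerXn2r => //; rewrite nnegrE //.
      by rewrite addr_ge0 // divr_ge0 // ltW.
    by rewrite addr_ge0 ?sqrtr_ge0 // (le_trans ler01 ha1).
  have : 2 / eps <= (a + Num.sqrt (a^+2 - 1)) ^+ k.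
    exact: le_trans hj2 (le_trans hpow_k hl).
  rewrite -[X in X <= _ -> _]/(2 * eps^-1) => h.
  by rewrite ler_pdivlMr // mulrC.
have hTz0 : 0 < Tz by apply: lt_le_trans hTz; rewrite invr_gt0.
pose U : {poly R[i]} := (a%:C)%:P - ((3^-1)%:C)%:P *
   (('X - (omega%:C)%:P)^+2 + ((eta^+2)%:C)%:P).
pose Q := (chebp U k).1.
have hUx : forall x : R, U.[x%:C] = (1 - (x - omega)^+2 / 3)%:C.
  move=> x; rewrite /U !hornerE /a.
  have h3 : (3 : R) != 0 by rewrite pnatr_eq0.
  by field.
clearbody a.
have hQx : forall x, Q.[x%:C] = ((chebp (1 - (x - omega)^+2 / 3) k).1)%:C.
  move=> x; have := congr1 fst (chebp_horner U x%:C k); rewrite /= -/Q => ->.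
  by rewrite hUx chebp_morph.
have hQz : Q.[z] = Tz%:C.
  have := congr1 fst (chebp_horner U z k); rewrite /= -/Q => ->.
  have -> : U.[z] = a%:C.
    rewrite /U !hornerE.
    have hi : 'i * 'i = -1 :> R[i] by rewrite -expr2 sqr_i.
    transitivity (a%:C - (3^-1)%:C * (eta%:C^+2 * ('i * 'i + 1))); first by rewrite /z; ring.
    by rewrite hi addNr !mulr0 subr0.
  by rewrite chebp_morph.
have hD : root ((Tz%:C)%:P - Q) z by rewrite rootE !hornerE hQz subrr.
case/factor_theorem: hD => q hq.
exists ((- (eta%:C / Tz%:C))%:P * q).
have hTzC : Tz%:C != 0 by rewrite fmorph_eq0 gt_eqF.
have herr : unif_le (fun x => green eta omega x - ((- (eta%:C / Tz%:C))%:P * q).[x%:C]) eps.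
  move=> x /andP[hx1 hx2].
  have e1 : Tz%:C - Q.[x%:C] = q.[x%:C] * (x%:C - z).
    by have := congr1 (fun P => P.[x%:C]) hq; rewrite /= !hornerE.
  have hxz : x%:C - z != 0 by rewrite -oppr_eq0 opprB hw0.
  have hqx : q.[x%:C] = (Tz%:C - Q.[x%:C]) / (x%:C - z) by rewrite e1 mulfK.
  have hE : green eta omega x - ((- (eta%:C / Tz%:C))%:P * q).[x%:C] =
            eta%:C * (z - x%:C)^-1 * Q.[x%:C] * (Tz%:C)^-1.
    rewrite !hornerE hqx /green -/z.
    have hzx := hw0 x.
    by field; apply/and3P; split; [exact: hTzC | exact: hzx | exact: hxz].
  rewrite hE !normrM !normfV normC_real hwn hQx !normC_real -!fmorphV -!rmorphM lecR.
  have hch : `|(chebp (1 - (x - omega)^+2 / 3) k).1| <= 1.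
    apply: cheb_le1; apply: (@sq_bound _ x omega c _ _ hc1); first by rewrite hx1 hx2.
    by rewrite hw1 hw2.
  have hg := hg_real x.
  have hTi : `|Tz|^-1 <= eps.
    by rewrite ger0_norm ?(ltW hTz0) // -[eps]invrK lef_pV2 // posrE ?invr_gt0.
  apply: (@le_trans _ _ (1 * eps)); last by rewrite mul1r.
  apply: ler_pM; rewrite ?mulr_ge0 ?invr_ge0 ?sqrtr_ge0 ?normr_ge0 //.
  apply: (@le_trans _ _ (1 * 1)); last by rewrite mul1r.
  apply: ler_pM; rewrite ?mulr_ge0 ?invr_ge0 ?sqrtr_ge0 ?normr_ge0 //.
split; last split => //; last first.
  by move=> x hx; apply: pbound (hgle x) (herr x hx).
have hsU : (size U <= 3)%N.
  rewrite /U; apply: leq_trans (size_polyD _ _) _; rewrite size_polyN geq_max.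
  apply/andP; split; first by apply: leq_trans (size_polyC_leq1 _) _.
  apply: leq_trans (size_polyMleq _ _) _.
  have h1 := size_polyC_leq1 ((3^-1 : R)%:C).
  have h2 : (size ((('X - (omega%:C)%:P)^+2 + ((eta^+2)%:C)%:P)%R : {poly R[i]}) <= 3)%N.
    apply: leq_trans (size_polyD _ _) _; rewrite size_exp_XsubC geq_max /=.
    by apply: leq_trans (size_polyC_leq1 _) _.
  by rewrite -subn1 leq_subLR; exact: leq_add h1 h2.
have hsQ := (@chebp_size _ U k hsU).1; rewrite -/Q in hsQ.
have hsD : (size ((Tz%:C)%:P - Q)%R <= k.*2.+1)%N.
  apply: leq_trans (size_polyD _ _) _; rewrite size_polyN geq_max hsQ andbT.
  by apply: leq_trans (size_polyC_leq1 _) _.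
have hsq : (size q <= k.*2)%N.
  have [->|hq0] := eqVneq q 0; first by rewrite size_poly0.
  move: hsD; rewrite hq size_mul ?polyXsubC_eq0 // size_XsubC addn2 /=.
  by [].
have hsp : ((size ((- (eta%:C / Tz%:C))%:P * q)%R).-1 <= k.*2)%N.
  apply: leq_trans (leq_pred _) _; apply: leq_trans (size_polyMleq _ _) _.
  have h1 := size_polyC_leq1 (- (eta%:C / Tz%:C)).
  by rewrite -subn1 leq_subLR; exact: leq_add h1 hsq.
apply: le_trans (_ : _ <= (k.*2)%:R) _; first by rewrite ler_nat.
rewrite -mul2n /k !natrM mulrA.
have -> : 18 / ln 2 * (eta^-1 * L) = 2 * (3 * eta^-1) * (3 * L * (ln 2)^-1) by ring.
rewrite -!mulrA ler_pM2l // mulrA.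
apply: ler_pM; rewrite ?ler0n // mulrA; exact: hj3.
Qed.
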